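(* Let $A$ and $B$ be C$^*$-algebras, where $A$ is unital with unit $1$. Let $T:A\to B$ be a linear map which is a $^*$-homomorphism at $1$. Then $T$ is a Jordan $^*$-homomorphism.
   Context: A map $T:A\to B$ between C$^*$-algebras is a $^*$-homomorphism at $z\in A$ if for all $a,b\in A$ with $ab^*=z$ one has $T(ab^* )=T(a)T(b)^*=T(z)$, and for all $c,d\in A$ with $c^*d=z$ one has $T(c^*d)=T(c)^*T(d)=T(z)$. A Jordan $^*$-homomorphism is a linear map $T$ with $T(a\circ b)=T(a)\circ T(b)$ for all $a,b$, where $a\circ b=\frac12(ab+ba)$, and $T(x^* )=T(x)^*$ for all $x$. *)

(* Defs.v *)
From HB Require Import structures.
From mathcomp Require Import all_boot all_order all_algebra.
From mathcomp Require Import complex.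
From mathcomp Require Import all_classical all_reals all_analysis.
Set Implicit Arguments. Unset Strict Implicit. Unset Printing Implicit Defensive.
Import Order.TTheory GRing.Theory Num.Theory.
Import numFieldNormedType.Exports.
Local Open Scope ring_scope.
Local Open Scope complex_scope.

Section CStar.
Variable R : realType.
Local Notation C := (R[i]).

Definition is_cstar_algebra (A : completeNormedModType C)
  (mul : A -> A -> A) (star : A -> A) : Prop :=
  (forall x y z : A, mul x (mul y z) = mul (mul x y) z) /\
      (forall (a : C) (x y z : A), mul (a *: x + y) z = a *: mul x z + mul y z) /\
      (forall (a : C) (x y z : A), mul z (a *: x + y) = a *: mul z x + mul z y) /\
      (forall (a : C) (x y : A), star (a *: x + y) = (a^*)%C *: star x + star y) /\
      (forall x : A, star (star x) = x) /\
      (forall x y : A, star (mul x y) = mul (star y) (star x)) /\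
      (forall x y : A, `|mul x y| <= `|x| * `|y|) /\
      (forall x : A, `|mul (star x) x| = `|x| ^+ 2).

Definition is_unit_elt (A : Type) (mul : A -> A -> A) (one : A) : Prop :=
  forall x, mul one x = x /\ mul x one = x.

Definition is_C_linear (A B : completeNormedModType C) (T : A -> B) : Prop :=
  forall (a : C) (x y : A), T (a *: x + y) = a *: T x + T y.

Definition star_hom_at (A B : completeNormedModType C)
  (mulA : A -> A -> A) (starA : A -> A) (mulB : B -> B -> B) (starB : B -> B)
  (T : A -> B) (z : A) : Prop :=
  (forall a b : A, mulA a (starA b) = z ->
      T (mulA a (starA b)) = mulB (T a) (starB (T b)) /\
      mulB (T a) (starB (T b)) = T z) /\
  (forall c d : A, mulA (starA c) d = z ->
      T (mulA (starA c) d) = mulB (starB (T c)) (T d) /\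
      mulB (starB (T c)) (T d) = T z).

Definition jordan (A : completeNormedModType C) (mul : A -> A -> A) (a b : A) : A :=
  (2%:R)^-1 *: (mul a b + mul b a).

Definition jordan_star_hom (A B : completeNormedModType C)
  (mulA : A -> A -> A) (starA : A -> A) (mulB : B -> B -> B) (starB : B -> B)
  (T : A -> B) : Prop :=
  is_C_linear T /\
  (forall a b : A, T (jordan mulA a b) = jordan mulB (T a) (T b)) /\
  (forall x : A, T (starA x) = starB (T x)).

End CStar.

(* Main.v *)
Require Import Defs.
From HB Require Import structures.
From mathcomp Require Import all_boot all_order all_algebra.
From mathcomp Require Import complex.
From mathcomp Require Import all_classical all_reals all_analysis.
From mathcomp Require Import ring lra zify.
Set Implicit Arguments. Unset Strict Implicit. Unset Printing Implicit Defensive.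
Import Order.TTheory GRing.Theory Num.Theory.
Import numFieldNormedType.Exports.
Local Open Scope ring_scope.
Local Open Scope complex_scope.


Section Fix.
Variable R : realType.
Local Notation C := (R[i]).
Variable A : completeNormedModType C.

Definition nr (x : A) : R := complex.Re `|x|.

Lemma normE x : `|x| = (nr x)%:C.
Proof.
have h := ger0_Im (normr_ge0 x); rewrite /nr; move: h.
by case: (`|x|) => a b /= ->.
Qed.

Lemma nr_ge0 x : 0 <= nr x.
Proof. by rewrite -lecR -normE normr_ge0. Qed.

Lemma nr0 : nr 0 = 0.
Proof. by rewrite /nr normr0. Qed.

Lemma nrD x y : nr (x + y) <= nr x + nr y.
Proof. have := ler_normD x y. by rewrite !normE -rmorphD lecR. Qed.

Lemma nrN x : nr (- x) = nr x.
Proof. by rewrite /nr normrN. Qed.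

Lemma nrC x y : nr (x - y) = nr (y - x).
Proof. by rewrite /nr distrC. Qed.

Lemma nr_eq0 x : nr x = 0 -> x = 0.
Proof. by move=> h; apply/normr0_eq0; rewrite normE h. Qed.

Lemma nrZ (a : R) x : nr (a%:C *: x) = `|a| * nr x.
Proof.
apply: (@complexI R); rewrite -normE normrZ normE rmorphM; congr (_ * _).
by rewrite normc_def /= expr0n /= addr0 sqrtr_sqr.
Qed.

Lemma half_pow_bound (N : nat) : (N.+1)%:R * (2^-1 : R) ^+ N <= 1.
Proof.
elim: N => [|N IH]; first by rewrite expr0 mulr1.
rewrite exprS mulrA.
have h : (N.+2)%:R * (2^-1 : R) <= N.+1%:R.
  rewrite -[_ * 2^-1]/(_ / 2) ler_pdivrMr // -natrM ler_nat. lia.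
apply: le_trans IH; apply: ler_wpM2r => //; exact: exprn_ge0.
Qed.

Lemma fixpt (F : A -> A) (rho : R) : 0 <= rho ->
  (forall x, nr x <= rho -> nr (F x) <= rho) ->
  (forall x y, nr x <= rho -> nr y <= rho -> nr (F x - F y) <= nr (x - y) / 2) ->
  exists l, nr l <= rho /\ F l = l.
Proof.
move=> rho0 Fb Fc.
pose y n := iter n F 0.
have yb n : nr (y n) <= rho.
  by elim: n => [|n IH]; [rewrite /= nr0 | exact: Fb].
have d1 n : nr (y n.+1 - y n) <= rho * (2^-1) ^+ n.
  elim: n => [|n IH]; first by rewrite expr0 mulr1 /= subr0 Fb // nr0.
  have -> : y n.+2 - y n.+1 = F (y n.+1) - F (y n) by [].
  apply: le_trans (Fc _ _ (yb _) (yb _)) _.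
  rewrite exprS mulrCA [_ / 2]mulrC.
  by apply: ler_wpM2l.
have dm n m : nr (y (n + m)%N - y n) <= 2 * rho * (2^-1) ^+ n * (1 - (2^-1) ^+ m).
  elim: m => [|m IH]; first by rewrite addn0 subrr nr0 expr0 subrr mulr0.
  rewrite addnS.
  have -> : y (n + m)%N.+1 - y n = (y (n + m)%N.+1 - y (n + m)%N) + (y (n + m)%N - y n).
    by rewrite addrA subrK.
  apply: le_trans (nrD _ _) _.
  have := d1 (n + m)%N; rewrite exprD => h.
  have e0 : 0 <= (2^-1 : R) ^+ n by exact: exprn_ge0.
  have e1 : 0 <= (2^-1 : R) ^+ m by exact: exprn_ge0.
  rewrite exprS.
  have -> : 2 * rho * (2^-1) ^+ n * (1 - 2^-1 * (2^-1) ^+ m) =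
     rho * ((2^-1) ^+ n * (2^-1) ^+ m) + 2 * rho * (2^-1) ^+ n * (1 - (2^-1) ^+ m).
    by field.
  exact: lerD.
have dm' n m : (n <= m)%N -> nr (y m - y n) <= 2 * rho * (2^-1) ^+ n.
  move=> /subnKC <-; apply: le_trans (dm _ _) _.
  rewrite -[leRHS]mulr1; apply: ler_wpM2l.
    by rewrite !mulr_ge0 // exprn_ge0.
  have : 0 <= (2^-1 : R) ^+ (m - n) by exact: exprn_ge0.
  lra.
have small e : 0 < e -> exists N : nat, 2 * rho * (2^-1) ^+ N < e.
  move=> e0.
  have := archi_boundP (x := 2 * rho / e) _; set N := Num.bound _ => hN.
  have x0 : 0 <= 2 * rho / e by rewrite divr_ge0 // ?mulr_ge0 // ltW.
  have hN' : 2 * rho / e < N.+1%:R.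
    by apply: (lt_le_trans (hN x0)); rewrite ler_nat.
  exists N.
  have := half_pow_bound N.
  have p0 : 0 <= (2^-1 : R) ^+ N by exact: exprn_ge0.
  move: hN'; rewrite ltr_pdivrMr // => hN'' hb.
  nra.
have cy : cvgn y.
  apply/cauchy_cvgP/cauchyP => -[a b]; rewrite ltcE /= => /andP[/eqP b0 a0].
  have [N hN] := small a a0.
  exists (y N); exists N => // n /= hn.
  rewrite -ball_normE /ball_ /= b0 complexr0 normE ltcR nrC.
  exact: le_lt_trans (dm' _ _ hn) hN.
have near e : 0 < e -> exists N, forall n, (N <= n)%N -> nr (limn y - y n) < e.
  move=> e0; have e0' : (0 : C) < e%:C by rewrite ltcR.
  have [N _ HN] := cvgr_dist_lt y (limn y) cy _ e0'.
  by exists N => n hn; have := HN n hn; rewrite /= normE ltcR.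
set l := limn y in near.
have lb : nr l <= rho.
  apply/ler_addgt0Pr => e e0; have [N HN] := near e e0.
  have := HN N (leqnn N); have := yb N; have := nrD (l - y N) (y N); rewrite subrK.
  lra.
exists l; split => //.
apply/subr0_eq/nr_eq0/le_anti; rewrite nr_ge0 andbT.
apply/ler_addgt0Pr => e e0; rewrite add0r.
have e2 : 0 < e / 2 by rewrite divr_gt0.
have [N HN] := near (e / 2) e2.
have -> : F l - l = (F l - F (y N)) + (y N.+1 - l) by rewrite addrA subrK.
apply: le_trans (nrD _ _) _.
have h1 := Fc _ _ lb (yb N).
have h2 := HN N (leqnn N).
have h3 := HN N.+1 (leqnSn N).
rewrite [nr (y N.+1 - l)]nrC.
have := nr_ge0 (l - y N).
lra.
Qed.
End Fix.

Section Alg.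
Variable R : realType.
Local Notation C := (R[i]).
Variable A : completeNormedModType C.
Variables (mul : A -> A -> A) (st : A -> A).
Hypothesis HA : is_cstar_algebra mul st.

Lemma cmulA x y z : mul x (mul y z) = mul (mul x y) z.
Proof. by case: HA. Qed.
Lemma cmulDl x y z : mul (x + y) z = mul x z + mul y z.
Proof. by have [_ [H _]] := HA; have := H 1 x y z; rewrite !scale1r. Qed.
Lemma cmulDr x y z : mul z (x + y) = mul z x + mul z y.
Proof. by have [_ [_ [H _]]] := HA; have := H 1 x y z; rewrite !scale1r. Qed.
Lemma cmul0l z : mul 0 z = 0.
Proof. by have H := cmulDl 0 0 z; rewrite addr0 in H; apply/(addrI (mul 0 z)); rewrite addr0 -H. Qed.
Lemma cmul0r z : mul z 0 = 0.
Proof. by have H := cmulDr 0 0 z; rewrite addr0 in H; apply/(addrI (mul z 0)); rewrite addr0 -H. Qed.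
Lemma cmulZl a x z : mul (a *: x) z = a *: mul x z.
Proof. by have [_ [H _]] := HA; have := H a x 0 z; rewrite !addr0 cmul0l addr0. Qed.
Lemma cmulZr a x z : mul z (a *: x) = a *: mul z x.
Proof. by have [_ [_ [H _]]] := HA; have := H a x 0 z; rewrite !addr0 cmul0r addr0. Qed.
Lemma cmulNl x z : mul (- x) z = - mul x z.
Proof. by rewrite -scaleN1r cmulZl scaleN1r. Qed.
Lemma cmulNr x z : mul z (- x) = - mul z x.
Proof. by rewrite -scaleN1r cmulZr scaleN1r. Qed.
Lemma cmulBl x y z : mul (x - y) z = mul x z - mul y z.
Proof. by rewrite cmulDl cmulNl. Qed.
Lemma cmulBr x y z : mul z (x - y) = mul z x - mul z y.
Proof. by rewrite cmulDr cmulNr. Qed.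
Lemma cstK x : st (st x) = x.
Proof. by have [_ [_ [_ [_ [H _]]]]] := HA. Qed.
Lemma cstM x y : st (mul x y) = mul (st y) (st x).
Proof. by have [_ [_ [_ [_ [_ [H _]]]]]] := HA. Qed.
Lemma cstD x y : st (x + y) = st x + st y.
Proof. by have [_ [_ [_ [H _]]]] := HA; have := H 1 x y; rewrite conjc1 !scale1r. Qed.
Lemma cst0 : st 0 = 0.
Proof. by have H := cstD 0 0; rewrite addr0 in H; apply/(addrI (st 0)); rewrite addr0 -H. Qed.
Lemma cstZ a x : st (a *: x) = (a^*)%C *: st x.
Proof. by have [_ [_ [_ [H _]]]] := HA; have := H a x 0; rewrite !addr0 cst0 addr0. Qed.
Lemma cstN x : st (- x) = - st x.
Proof. by rewrite -scaleN1r cstZ rmorphN1 scaleN1r. Qed.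
Lemma cstB x y : st (x - y) = st x - st y.
Proof. by rewrite cstD cstN. Qed.
End Alg.

Section CS.
Variable R : realType.
Local Notation C := (R[i]).
Variable A : completeNormedModType C.
Variables (mul : A -> A -> A) (st : A -> A).
Hypothesis HA : is_cstar_algebra mul st.
Variable one : A.
Hypothesis Hone : is_unit_elt mul one.

Lemma cmul1l x : mul one x = x. Proof. by case: (Hone x). Qed.
Lemma cmul1r x : mul x one = x. Proof. by case: (Hone x). Qed.
Lemma st_one : st one = one.
Proof.
have : st (st one) = st (mul one (st one)) by rewrite cmul1l.
by rewrite (cstM HA) !(cstK HA) cmul1l => <-.
Qed.

Lemma nrM x y : nr (mul x y) <= nr x * nr y.
Proof.
have [_ [_ [_ [_ [_ [_ [H _]]]]]]] := HA.
by have := H x y; rewrite !normE -rmorphM lecR.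
Qed.

Lemma nrCst x : nr (mul (st x) x) = nr x ^+ 2.
Proof.
have [_ [_ [_ [_ [_ [_ [_ H]]]]]]] := HA.
by apply: (@complexI R); have := H x; rewrite !normE rmorphXn.
Qed.

Lemma nr_st_le x : nr x <= nr (st x).
Proof.
have h1 := nrCst x; have h2 := nrM (st x) x.
have := nr_ge0 x; have := nr_ge0 (st x).
rewrite h1 in h2; nra.
Qed.

Lemma nr_st x : nr (st x) = nr x.
Proof. by apply/le_anti; rewrite nr_st_le -{2}[x](cstK HA) nr_st_le. Qed.

Lemma nr_one : nr one <= 1.
Proof.
have h := nrCst one; rewrite st_one cmul1l in h.
have := nr_ge0 one; nra.
Qed.

Lemma zero_of_contr (d : A) (a : R) : 2 * a <= 1 -> nr d <= a * nr d -> d = 0.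
Proof.
move=> ha hd; apply: nr_eq0; apply/le_anti; rewrite nr_ge0 andbT.
have := nr_ge0 d; nra.
Qed.

Lemma neumann k : 2 * nr k <= 1 ->
  exists y, mul (one - k) y = one /\ mul y (one - k) = one.
Proof.
move=> hk; have n1 := nr_one; have k0 := nr_ge0 k.
have Fb : forall x, nr x <= 2 -> nr (one + mul k x) <= 2.
  move=> x hx /=; have := nrD one (mul k x); have := nrM k x; have := nr_ge0 x.
  nra.
have Fc : forall x z, nr x <= 2 -> nr z <= 2 ->
    nr ((one + mul k x) - (one + mul k z)) <= nr (x - z) / 2.
  move=> x z hx hz /=.
  rewrite opprD addrACA subrr add0r -(cmulBr HA).
  have := nrM k (x - z); have := nr_ge0 (x - z).
  rewrite ler_pdivlMr //. nra.
have [y [_ hy]] := @fixpt R A (fun x => one + mul k x) 2 (ler0n _ 2) Fb Fc.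
have e1 : mul y k = k + mul (mul k y) k by rewrite -{1}hy (cmulDl HA) cmul1l.
have e2 : mul k y = k + mul k (mul k y) by rewrite -{1}hy (cmulDr HA) cmul1r.
have hd : mul k y - mul y k = mul k (mul k y - mul y k).
  rewrite (cmulBr HA) [mul k (mul y k)](cmulA HA).
  by rewrite {1}e2 e1 opprD addrACA subrr add0r.
have d0 : mul k y - mul y k = 0.
  apply: (zero_of_contr hk); rewrite {1}hd; exact: nrM.
have hl : mul (one - k) y = one by rewrite (cmulBl HA) cmul1l -{1}hy addrK.
exists y; split => //.
rewrite (cmulBr HA) cmul1r.
by move/subr0_eq: d0 => <-; rewrite -hl (cmulBl HA) cmul1l.
Qed.

Lemma sqrt_ex h : st h = h -> 2 * nr h <= 1 ->
  exists r, [/\ st r = r, mul r r = one - mul h h & mul h r = mul r h].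
Proof.
move=> sth hh.
pose k := mul h h.
set q := (2^-1 : R).
have q2 : 2 * q = 1 by rewrite /q mulfV.
have q0 : 0 < q by rewrite /q invr_gt0.
have hq : nr h <= q by nra.
have nk : nr k <= q * q.
  have := nrM h h; have := nr_ge0 h; rewrite -/k; nra.
pose F s := q%:C *: (k + mul s s).
have nF v : nr (q%:C *: v) = q * nr v by rewrite nrZ ger0_norm // ltW.
have Fb : forall s, nr s <= q -> nr (F s) <= q.
  move=> s hs; rewrite /F nF.
  have := nrD k (mul s s); have := nrM s s; have := nr_ge0 s; have := nr_ge0 (k + mul s s).
  nra.
have Fc : forall a b, nr a <= q -> nr b <= q -> nr (F a - F b) <= nr (a - b) / 2.
  move=> a b ha hb; rewrite /F -scalerBr opprD addrACA subrr add0r nF.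
  have -> : mul a a - mul b b = mul a (a - b) + mul (a - b) b.
    by rewrite (cmulBr HA) (cmulBl HA) addrA subrK.
  have := nrD (mul a (a - b)) (mul (a - b) b); have := nrM a (a - b); have := nrM (a - b) b.
  have := nr_ge0 a; have := nr_ge0 b; have := nr_ge0 (a - b).
  have := nr_ge0 (mul a (a - b) + mul (a - b) b).
  rewrite -[_ / 2]/(_ * q). nra.
have [s [hs Fs]] := @fixpt R A F q (ltW q0) Fb Fc.
have stk : st k = k by rewrite /k (cstM HA) sth.
have Ft : F (st s) = st s.
  by have := congr1 st Fs; rewrite /F (cstZ HA) conjc_real (cstD HA) stk (cstM HA).
have hst : st s = s.
  apply/eqP; rewrite -subr_eq0; apply/eqP; apply: (@zero_of_contr _ q); first by rewrite q2.
  have := Fc (st s) s _ hs; rewrite Ft Fs nr_st // => /(_ hs).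
  by rewrite mulrC.
have e' : k + mul s s = s + s.
  have := congr1 (fun v => 2%:C *: v) Fs; rewrite /F /= scalerA -rmorphM q2 scale1r => ->.
  by rewrite -[2%:C]/((2%:R : R)%:C) rmorph_nat scaler_nat mulr2n.
have e : mul s s = s + s - k by rewrite -e' [k + _]addrC addrK.
have e2 : mul h s = q%:C *: (mul h k + mul h (mul s s)).
  by rewrite -[in LHS]Fs /F (cmulZr HA) (cmulDr HA).
have e3 : mul s h = q%:C *: (mul k h + mul (mul s s) h).
  by rewrite -[in LHS]Fs /F (cmulZl HA) (cmulDl HA).
have hk : mul h k = mul k h by rewrite /k (cmulA HA).
have e4 : mul h (mul s s) - mul (mul s s) h =
    mul (mul h s - mul s h) s + mul s (mul h s - mul s h).
  by rewrite (cmulBl HA) (cmulBr HA) !(cmulA HA) addrA subrK.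
have hd : mul h s - mul s h =
    q%:C *: (mul (mul h s - mul s h) s + mul s (mul h s - mul s h)).
  by rewrite -e4 {1}e2 {1}e3 -scalerBr hk opprD addrACA subrr add0r.
have d0 : mul h s - mul s h = 0.
  apply: (@zero_of_contr _ q); first by rewrite q2.
  rewrite {1}hd nF.
  set d := mul h s - mul s h.
  have := nrD (mul d s) (mul s d); have := nrM d s; have := nrM s d.
  have := nr_ge0 s; have := nr_ge0 d; have := nr_ge0 (mul d s + mul s d).
  nra.
exists (one - s); split.
- by rewrite (cstB HA) st_one hst.
- rewrite (cmulBl HA) cmul1l !(cmulBr HA) cmul1r e -/k.
  by rewrite opprB [s + s - k]addrAC addrK addrA subrK.
- rewrite (cmulBl HA) (cmulBr HA) cmul1l cmul1r.
  by move/subr0_eq: d0 => ->.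
Qed.

Lemma conj_i : ('i%C : C)^* = - 'i%C.
Proof. by apply/eqP; rewrite eq_complex /= oppr0 !eqxx. Qed.

Lemma conj_Ni : (- 'i%C : C)^* = 'i%C.
Proof. by apply/eqP; rewrite eq_complex /= oppr0 opprK !eqxx. Qed.

Lemma i_i : ('i%C : C) * 'i%C = -1.
Proof. by rewrite -expr2 sqr_i. Qed.

Lemma halfC : (2^-1 : C) + 2^-1 = 1.
Proof. by rewrite [in RHS](splitr 1) mul1r. Qed.

Definition unitary u := mul u (st u) = one /\ mul (st u) u = one.

Lemma unitary_st u : unitary u -> unitary (st u).
Proof. by case=> h1 h2; split; rewrite (cstK HA). Qed.

Lemma sa_unitary h : st h = h -> 2 * nr h <= 1 ->
  exists u, unitary u /\ h = (2^-1 : C) *: (u + st u).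
Proof.
move=> sth hh; have [r [str rr hr]] := sqrt_ex sth hh.
set j := ('i%C : C).
have stu : st (h + j *: r) = h - j *: r.
  by rewrite (cstD HA) (cstZ HA) sth str conj_i scaleNr.
exists (h + j *: r); rewrite /unitary stu; split; first split.
- rewrite (cmulDl HA) !(cmulBr HA) !(cmulZr HA) !(cmulZl HA) scalerA i_i scaleN1r.
  by rewrite hr opprK addrA subrK rr addrC subrK.
- rewrite (cmulBl HA) !(cmulDr HA) !(cmulZr HA) !(cmulZl HA) scalerA i_i scaleN1r.
  by rewrite hr opprD addrA addrK opprK rr addrC subrK.
- by rewrite addrACA subrr addr0 scalerDr -scalerDl halfC scale1r.
Qed.

Lemma unitary_span (P : A -> Prop) :
  (forall (a : C) x y, P x -> P y -> P (a *: x + y)) ->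
  (forall u, unitary u -> P u) ->
  forall x, P x.
Proof.
move=> Pc Pu.
have P1 : P one by apply: Pu; split; rewrite st_one cmul1l.
have P0 : P 0 by have := Pc (-1) _ _ P1 P1; rewrite scaleN1r addNr.
have PZ a x : P x -> P (a *: x) by move=> px; have := Pc a _ _ px P0; rewrite addr0.
have PD x y : P x -> P y -> P (x + y) by move=> px py; have := Pc 1 _ _ px py; rewrite scale1r.
have Psa h : st h = h -> P h.
  move=> sth.
  pose l := 2 * nr h + 1.
  have l0 : 0 < l by have := nr_ge0 h; rewrite /l; lra.
  have sth' : st ((l^-1)%:C *: h) = (l^-1)%:C *: h by rewrite (cstZ HA) conjc_real sth.
  have hh' : 2 * nr ((l^-1)%:C *: h) <= 1.
    rewrite nrZ ger0_norm ?invr_ge0 ?ltW //.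
    have li : l * l^-1 = 1 by rewrite mulfV // gt_eqF.
    have li0 : 0 <= l^-1 by rewrite invr_ge0 ltW.
    have := nr_ge0 h; move: li li0; rewrite /l; nra.
  have [u [uu hu]] := sa_unitary sth' hh'.
  have -> : h = l%:C *: ((l^-1)%:C *: h).
    by rewrite scalerA -rmorphM mulfV ?gt_eqF // scale1r.
  rewrite hu scalerA scalerDr; apply: PD; apply: PZ; apply: Pu => //.
  exact: unitary_st.
move=> x.
have -> : x = (2^-1 : C) *: (x + st x) + 'i%C *: (2^-1 *: ((- 'i%C) *: (x - st x))).
  rewrite !scalerA mulrAC mulrN i_i opprK mul1r -scalerDr addrACA subrr addr0.
  by rewrite scalerDr -scalerDl halfC scale1r.
apply PD; first by apply PZ; apply Psa; rewrite (cstD HA) (cstK HA) addrC.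
apply PZ; apply PZ; apply Psa.
rewrite (cstZ HA) (cstB HA) (cstK HA) conj_Ni.
by rewrite -opprB scalerN -scaleNr.
Qed.
End CS.

Lemma zmod_id1 (V : zmodType) (a b c : V) : (a + b) + (b + c) - (a + c) = b + b.
Proof. by rewrite [b + c]addrC addrACA [X in X - _]addrC addrK. Qed.

Section Zero.
Variable R : realType.
Local Notation C := (R[i]).
Variable A : completeNormedModType C.
Variables (mul : A -> A -> A) (st : A -> A).
Hypothesis HA : is_cstar_algebra mul st.

Lemma zero_s w : mul (st w) w = 0 -> w = 0.
Proof.
move=> h; have := nrCst HA w; rewrite h nr0 => /esym/eqP.
by rewrite expf_eq0 /= => /eqP/nr_eq0.
Qed.

Lemma zero_ss w : mul w (st w) = 0 -> w = 0.
Proof.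
move=> h; have : st w = 0 by apply: zero_s; rewrite (cstK HA).
by move/(congr1 st); rewrite (cstK HA) (cst0 HA).
Qed.
End Zero.

Section Lin.
Variable R : realType.
Local Notation C := (R[i]).
Variables (A B : completeNormedModType C) (T : A -> B).
Hypothesis HT : is_C_linear T.
Lemma TD x y : T (x + y) = T x + T y.
Proof. by have := HT 1 x y; rewrite !scale1r. Qed.
Lemma T0 : T 0 = 0.
Proof. by have H := TD 0 0; rewrite addr0 in H; apply/(addrI (T 0)); rewrite addr0 -H. Qed.
Lemma TZ a x : T (a *: x) = a *: T x.
Proof. by have := HT a x 0; rewrite !addr0 T0 addr0. Qed.
Lemma TN x : T (- x) = - T x.
Proof. by rewrite -scaleN1r TZ scaleN1r. Qed.
Lemma TB x y : T (x - y) = T x - T y.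
Proof. by rewrite TD TN. Qed.
End Lin.

Section Main.
Variable R : realType.
Local Notation C := (R[i]).
Variables (A B : completeNormedModType C).
Variables (mulA : A -> A -> A) (starA : A -> A) (mulB : B -> B -> B) (starB : B -> B).
Hypothesis HA : is_cstar_algebra mulA starA.
Hypothesis HBB : is_cstar_algebra mulB starB.
Variable one : A.
Hypothesis Hone : is_unit_elt mulA one.
Variable T : A -> B.
Hypothesis HT : is_C_linear T.
Hypothesis Hhom : star_hom_at mulA starA mulB starB T one.

Local Notation p := (T one).

Lemma hom1 a b : mulA a (starA b) = one -> mulB (T a) (starB (T b)) = p.
Proof. by move=> h; have [H _] := Hhom; case: (H a b h). Qed.
Lemma hom2 c d : mulA (starA c) d = one -> mulB (starB (T c)) (T d) = p.
Proof. by move=> h; have [_ H] := Hhom; case: (H c d h). Qed.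

Lemma one1 : mulA one (starA one) = one.
Proof. by rewrite (st_one HA Hone) (cmul1l Hone). Qed.

Lemma sp : starB p = p.
Proof.
have h1 := hom1 one1.
have : starB (mulB p (starB p)) = starB p by rewrite h1.
by rewrite (cstM HBB) (cstK HBB) h1.
Qed.

Lemma pp : mulB p p = p.
Proof. by have := hom1 one1; rewrite sp. Qed.

Lemma corner_unitary u : unitary mulA starA one u ->
  mulB p (T u) = T u /\ mulB (T u) p = T u.
Proof.
case=> u1 u2.
have a1 := hom1 u1.
have a2 := hom2 u2.
set X := T u in a1 a2 *; set Y := starB X in a1 a2 *.
split.
- apply/eqP; rewrite eq_sym -subr_eq0; apply/eqP; apply: (zero_ss HBB).
  rewrite (cstB HBB) (cstM HBB) sp -/Y.
  rewrite (cmulBl HBB) !(cmulBr HBB).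
  have e1 : mulB X (mulB Y p) = mulB (mulB X Y) p by rewrite !(cmulA HBB).
  have e2 : mulB (mulB p X) Y = mulB p (mulB X Y) by rewrite !(cmulA HBB).
  have e3 : mulB (mulB p X) (mulB Y p) = mulB p (mulB (mulB X Y) p) by rewrite !(cmulA HBB).
  by rewrite e1 e2 e3 a1 pp pp subrr.
- apply/eqP; rewrite eq_sym -subr_eq0; apply/eqP; apply: (zero_s HBB).
  rewrite (cstB HBB) (cstM HBB) sp -/Y.
  rewrite (cmulBl HBB) !(cmulBr HBB).
  have e1 : mulB Y (mulB X p) = mulB (mulB Y X) p by rewrite !(cmulA HBB).
  have e2 : mulB (mulB p Y) X = mulB p (mulB Y X) by rewrite !(cmulA HBB).
  have e3 : mulB (mulB p Y) (mulB X p) = mulB p (mulB (mulB Y X) p) by rewrite !(cmulA HBB).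
  by rewrite e1 e2 e3 a2 pp pp subrr.
Qed.

Lemma corner x : mulB p (T x) = T x /\ mulB (T x) p = T x.
Proof.
apply: (unitary_span HA Hone (P := fun x => mulB p (T x) = T x /\ mulB (T x) p = T x)).
- move=> a y z [h1 h2] [h3 h4]; rewrite HT.
  by rewrite (cmulDr HBB) (cmulZr HBB) (cmulDl HBB) (cmulZl HBB) h1 h2 h3 h4.
- exact: corner_unitary.
Qed.
Lemma cornerl x : mulB p (T x) = T x. Proof. by case: (corner x). Qed.
Lemma cornerr x : mulB (T x) p = T x. Proof. by case: (corner x). Qed.
Lemma cornersl x : mulB p (starB (T x)) = starB (T x).
Proof. by rewrite -{1}sp -(cstM HBB) cornerr. Qed.
Lemma cornersr x : mulB (starB (T x)) p = starB (T x).
Proof. by rewrite -sp -(cstM HBB) cornerl. Qed.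


Lemma hua a a' b' : mulA a a' = one -> mulA a' a = one ->
  mulA (one - a) b' = one -> mulA b' (one - a) = one ->
  T (mulA a a) = mulB (T a) (T a).
Proof.
move=> h1 h2 h3 h4.
set X := T a.
set U := starB (T (starA a')).
set V := starB (T (starA b')).
have XU : mulB X U = p by apply: hom1; rewrite (cstK HA).
have XV : mulB (p - X) V = p by rewrite -(TB HT); apply: hom1; rewrite (cstK HA).
have eW : starB (T (starA (a' + b'))) = U + V by rewrite (cstD HA) (TD HT) (cstD HBB).
have ec : mulA a (one - a) = a - mulA a a by rewrite (cmulBr HA) (cmul1r Hone).
have cinv : mulA (a' + b') (mulA a (one - a)) = one.
  have cm : mulA a (one - a) = mulA (one - a) a.
    by rewrite (cmulBr HA) (cmulBl HA) (cmul1r Hone) (cmul1l Hone).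
  rewrite (cmulDl HA) {2}cm !(cmulA HA) h2 h4 (cmul1l Hone) (cmul1l Hone).
  by rewrite subrK.
have WZ : mulB (U + V) (T (mulA a (one - a))) = p.
  by rewrite -eW; apply: hom2; rewrite (cstK HA).
rewrite ec (TB HT) -/X in WZ.
set Z' := X - mulB X X.
have Z1 : Z' = mulB (p - X) X by rewrite (cmulBl HBB) cornerl.
have Z2 : Z' = mulB X (p - X) by rewrite (cmulBr HBB) cornerr.
have Z'W : mulB Z' (U + V) = p.
  rewrite (cmulDr HBB) {1}Z1 {1}Z2 -!(cmulA HBB) XU XV.
  by rewrite (cmulBl HBB) pp cornerr subrK.
have Z'p : mulB Z' p = Z'.
  by rewrite (cmulBl HBB) cornerr -(cmulA HBB) cornerr.
have : Z' = X - T (mulA a a).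
  by rewrite -Z'p -WZ (cmulA HBB) Z'W (cmulBr HBB) !cornerl.
by rewrite /Z' => /addrI/oppr_inj ->.
Qed.

Lemma c2 : (2^-1 : C) * 2 = 1. Proof. by rewrite mulVf // pnatr_eq0. Qed.
Lemma c2' : (2 : C) * 2^-1 = 1. Proof. by rewrite mulfV // pnatr_eq0. Qed.

Lemma sq_small k : 2 * nr k <= 1 -> T (mulA k k) = mulB (T k) (T k).
Proof.
move=> hk.
have [y [y1 y2]] := neumann HA Hone hk.
have hk' : 2 * nr (- k) <= 1 by rewrite nrN.
have [z [z1 z2]] := neumann HA Hone hk'.
set h := (2^-1 : C).
pose a := h *: (one - k).
have o2 : one = h *: one + h *: one by rewrite -scalerDl halfC scale1r.
have e1 : one - a = h *: (one - - k).
  rewrite /a opprK scalerBr scalerDr opprB {1}o2 addrACA subrr addr0.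
  by rewrite addrC.
have ha1 : mulA a (2 *: y) = one.
  by rewrite /a (cmulZl HA) (cmulZr HA) scalerA y1 c2 scale1r.
have ha2 : mulA (2 *: y) a = one.
  by rewrite /a (cmulZl HA) (cmulZr HA) scalerA y2 c2' scale1r.
have hb1 : mulA (one - a) (2 *: z) = one.
  by rewrite e1 (cmulZl HA) (cmulZr HA) scalerA z1 c2 scale1r.
have hb2 : mulA (2 *: z) (one - a) = one.
  by rewrite e1 (cmulZl HA) (cmulZr HA) scalerA z2 c2' scale1r.
have hh := hua ha1 ha2 hb1 hb2.
move: hh; rewrite /a (cmulZl HA) (cmulZr HA) scalerA !(TZ HT) (cmulZl HBB) (cmulZr HBB).
rewrite scalerA => /scalerI; rewrite mulf_neq0 ?invr_eq0 ?pnatr_eq0 // => /(_ isT).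
rewrite (cmulBl HA) (cmulBr HA) (cmulBr HA) !(cmul1l Hone) (cmul1r Hone) !(TB HT).
rewrite (cmulBl HBB) (cmulBr HBB) (cmulBr HBB) pp cornerl cornerr.
by move=> /addrI/oppr_inj/addrI/oppr_inj.
Qed.

Lemma cR_neq0 (x : R) : x != 0 -> x%:C != 0.
Proof. by rewrite eq_complex /= eqxx andbT. Qed.

Lemma sq x : T (mulA x x) = mulB (T x) (T x).
Proof.
pose l := 2 * nr x + 1.
have l0 : 0 < l by have := nr_ge0 x; rewrite /l; lra.
pose k := (l^-1)%:C *: x.
have hk : 2 * nr k <= 1.
  rewrite /k nrZ ger0_norm ?invr_ge0 ?ltW //.
  have li : l * l^-1 = 1 by rewrite mulfV // gt_eqF.
  have li0 : 0 <= l^-1 by rewrite invr_ge0 ltW.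
  have := nr_ge0 x; move: li li0; rewrite /l; nra.
have := sq_small hk.
rewrite /k (cmulZl HA) (cmulZr HA) scalerA !(TZ HT) (cmulZl HBB) (cmulZr HBB) scalerA.
move/scalerI; apply; apply: mulf_neq0; apply: cR_neq0; rewrite invr_eq0 gt_eqF //.
Qed.

Lemma jord x y : T (mulA x y + mulA y x) = mulB (T x) (T y) + mulB (T y) (T x).
Proof.
have := sq (x + y).
rewrite (cmulDl HA) !(cmulDr HA) !(TD HT) (cmulDl HBB) !(cmulDr HBB) !sq.
move=> h.
apply: (addrI (mulB (T x) (T x))); apply: (addIr (mulB (T y) (T y))).
move: h; rewrite !addrA => h.
exact: h.
Qed.

Lemma double_inj (u v : B) : u + u = v + v -> u = v.
Proof.
move=> h; have := congr1 (fun w => (2^-1 : C) *: w) h.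
by rewrite /= !scalerDr -!scalerDl halfC !scale1r.
Qed.

Lemma triple x y : T (mulA (mulA x y) x) = mulB (mulB (T x) (T y)) (T x).
Proof.
have iA : mulA (mulA x y) x + mulA (mulA x y) x =
  (mulA x (mulA x y + mulA y x) + mulA (mulA x y + mulA y x) x)
   - (mulA (mulA x x) y + mulA y (mulA x x)).
  by rewrite (cmulDr HA) (cmulDl HA) !(cmulA HA) zmod_id1.
set X := T x; set Y := T y.
have iB : mulB (mulB X Y) X + mulB (mulB X Y) X =
  (mulB X (mulB X Y + mulB Y X) + mulB (mulB X Y + mulB Y X) X)
   - (mulB (mulB X X) Y + mulB Y (mulB X X)).
  by rewrite (cmulDr HBB) (cmulDl HBB) !(cmulA HBB) zmod_id1.
apply: double_inj.
have := congr1 T iA; rewrite (TD HT) (TB HT) !jord sq -/X -/Y -iB.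
done.
Qed.

Lemma star_unitary u : unitary mulA starA one u -> T (starA u) = starB (T u).
Proof.
case=> u1 u2.
have a1 := hom1 u1.
have a2 := hom2 u2.
have tr := triple u (starA u).
rewrite u1 (cmul1l Hone) in tr.
set X := T u in a1 a2 tr *; set V := T (starA u) in tr *.
have h1 : mulB (mulB (starB X) (mulB (mulB X V) X)) (starB X) = starB X.
  by rewrite -tr a2 cornersl.
have h2 : mulB (mulB (starB X) (mulB (mulB X V) X)) (starB X) =
    mulB (mulB (mulB (starB X) X) V) (mulB X (starB X)).
  by rewrite !(cmulA HBB).
rewrite -h1 h2 a1 a2.
by rewrite cornerl cornerr.
Qed.

Lemma star_all x : T (starA x) = starB (T x).
Proof.
apply: (unitary_span HA Hone (P := fun x => T (starA x) = starB (T x))).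
- move=> a y z h1 h2.
  by rewrite (cstD HA) (cstZ HA) !HT h1 h2 (cstD HBB) (cstZ HBB).
- exact: star_unitary.
Qed.

Lemma main_result : jordan_star_hom mulA starA mulB starB T.
Proof.
split; first exact: HT.
split.
- by move=> a b; rewrite /jordan (TZ HT) jord.
- exact: star_all.
Qed.
End Main.

Theorem theorem2p5 (R : realType) (A B : completeNormedModType R[i])
  (mulA : A -> A -> A) (starA : A -> A) (mulB : B -> B -> B) (starB : B -> B)
  (HA : is_cstar_algebra mulA starA) (HB : is_cstar_algebra mulB starB)
  (one : A) (Hone : is_unit_elt mulA one)
  (T : A -> B) (HT : is_C_linear T)
  (Hhom : star_hom_at mulA starA mulB starB T one) :
  jordan_star_hom mulA starA mulB starB T.
Proof. exact: (main_result HA HB Hone HT Hhom). Qed.
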